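(* Under the hypotheses and notation of the context (in particular with $\xi_k^c,\eta_k^c$, $k=1,2$, as defined there), the Geronimus perturbed monic orthogonal polynomials satisfy $$[Q_n^{c,N}]''(x)+\mathcal R(x;n)[Q_n^{c,N}]'(x)+\mathcal S(x;n)Q_n^{c,N}(x)=0,$$ where $$\mathcal R(x;n)=-\Big(\xi_1^c(x;n)+\eta_2^c(x;n)+\frac{[\eta_1^c(x;n)]'}{\eta_1^c(x;n)}\Big),$$ $$\mathcal S(x;n)=\xi_1^c(x;n)\eta_2^c(x;n)-\eta_1^c(x;n)\xi_2^c(x;n)+\frac{\xi_1^c(x;n)[\eta_1^c(x;n)]'-[\xi_1^c(x;n)]'\eta_1^c(x;n)}{\eta_1^c(x;n)}.$$
   Context: $\mu$ is a positive Borel measure on $\mathbb{R}$, absolutely continuous w.r.t. Lebesgue measure, with finite moments, supported on a set $E$ with infinitely many points; $c\in\mathbb{R}\setminus E$, $N>0$. $\mu$ is (semi-)classical: its monic orthogonal polynomials $P_n$ satisfy $xP_n=P_{n+1}+\beta_nP_n+\gamma_nP_{n-1}$ and $\sigma(x)P_n'=a(x;n)P_n+b(x;n)P_{n-1}$ with polynomials $\sigma,a,b$ of degrees independent of $n$. $\{Q_n^c\}$ is the MOPS for $\int fg\frac{1}{x-c}d\mu$; $\{Q_n^{c,N}\}$ is the MOPS for $\int fg\frac{1}{x-c}d\mu+Nf(c)g(c)$. $\Lambda_n^c=\frac{\pi_{n-1}-r_{n-1}}{1+NB_n^c}-\pi_{n-1}$ with $\pi_{n-1}=P_n(c)/P_{n-1}(c)$,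 $r_{n-1}=F_n(c)/F_{n-1}(c)$, $F_n(s)=\int\frac{P_n(x)}{x-s}d\mu(x)$, $F_{-1}=1$, $B_n^c=\frac{-Q_n^c(c)P_{n-1}(c)}{\int P_{n-1}^2d\mu}$. Define $B_2=\Lambda_{n-1}^c\big(\frac{1}{\Lambda_{n-1}^c}+\frac{x-\beta_{n-1}}{\gamma_{n-1}}\big)$, $\Delta=B_2+\frac{\Lambda_n^c\Lambda_{n-1}^c}{\gamma_{n-1}}$, $C_1=\frac{1}{\sigma}\big(a(x;n)-\Lambda_n^c\frac{b(x;n-1)}{\gamma_{n-1}}\big)$, $D_1=\frac1\sigma\big(b(x;n)+\Lambda_n^cb(x;n-1)\big(\frac{a(x;n-1)}{b(x;n-1)}+\frac{x-\beta_{n-1}}{\gamma_{n-1}}\big)\big)$, $C_2=\frac{-\Lambda_{n-1}^c}{\sigma}\big(\frac{a(x;n)}{\gamma_{n-1}}+\frac{b(x;n-1)}{\gamma_{n-1}}\big(\frac{1}{\Lambda_{n-1}^c}+\frac{x-\beta_{n-1}}{\gamma_{n-1}}\big)\big)$, $D_2=\frac{\Lambda_{n-1}^c}{\sigma}\big[\frac{\sigma-b(x;n)}{\gamma_{n-1}}+b(x;n-1)\big(\frac{a(x;n-1)}{b(x;n-1)}+\frac{x-\beta_{n-1}}{\gamma_{n-1}}\big)\big(\frac{1}{\Lambda_{n-1}^c}+\frac{x-\beta_{n-1}}{\gamma_{n-1}}\big)\big]$, and for $k=1,2$: $\xi_k^c=\frac{C_kB_2\gamma_{n-1}+D_k\Lambda_{n-1}^c}{\Delta\gamma_{n-1}}$,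 $\eta_k^c=\frac{D_k-C_k\Lambda_n^c}{\Delta}$ (all functions of $x$ and $n$). The statement concerns indices $n$ for which all quantities are defined. *)

(* Defs.v *)
From HB Require Import structures.
From mathcomp Require Import all_boot all_order all_algebra.
From mathcomp Require Import all_classical all_reals all_analysis.
Set Implicit Arguments. Unset Strict Implicit. Unset Printing Implicit Defensive.
Import Order.TTheory GRing.Theory Num.Theory.
Import numFieldNormedType.Exports.
Local Open Scope classical_set_scope.
Local Open Scope ring_scope.

Section Geronimus.
Variable R : realType.
Variable mu : {measure set (measurableTypeR R) -> \bar R}.

Definition ip (f : R -> R) : R := \int[mu]_(t in setT) f t.

Definition msupport : set R :=
  [set x : R | forall e : R, 0 < e -> (0 < mu `](x - e)%R, (x + e)%R[%classic)%E].

Definition mu_form (p q : {poly R}) : R := ip (fun t => p.[t] * q.[t]).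
Definition geron_form (c : R) (p q : {poly R}) : R :=
  ip (fun t => p.[t] * q.[t] / (t - c)).
Definition geronN_form (c N : R) (p q : {poly R}) : R :=
  geron_form c p q + N * p.[c] * q.[c].

Definition Fst (P : nat -> {poly R}) (n : nat) (s : R) : R :=
  ip (fun t => (P n).[t] / (t - s)).

End Geronimus.

Definition is_MOPS (R : ringType) (B : {poly R} -> {poly R} -> R)
  (Q : nat -> {poly R}) : Prop :=
  forall n, [/\ Q n \is monic, size (Q n) = n.+1,
             (forall m, m <> n -> B (Q n) (Q m) = 0) & B (Q n) (Q n) <> 0].

Definition Pprev (R : ringType) (P : nat -> {poly R}) (n : nat) : {poly R} :=
  if n is m.+1 then P m else 0.

Section Quantities.
Variable R : realType.
Variable mu : {measure set (measurableTypeR R) -> \bar R}.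
Variables (P Qc : nat -> {poly R}) (beta gamma : nat -> R) (sig : {poly R})
          (a b : nat -> {poly R}) (c N : R).

Definition piC (k : nat) : R := (P k.+1).[c] / (P k).[c].
Definition rC (k : nat) : R := Fst mu P k.+1 c / Fst mu P k c.
Definition Bc (k : nat) : R :=
  - (Qc k).[c] * (P k.-1).[c] / mu_form mu (P k.-1) (P k.-1).
Definition Lam (k : nat) : R :=
  (piC k.-1 - rC k.-1) / (1 + N * Bc k) - piC k.-1.

Variable n : nat.
Let Ln := Lam n.
Let Lm := Lam n.-1.
Let bet := beta n.-1.
Let gam := gamma n.-1.

Definition B2f (x : R) : R := Lm * (1 / Lm + (x - bet) / gam).
Definition Deltaf (x : R) : R := B2f x + Ln * Lm / gam.
Definition C1f (x : R) : R :=
  1 / sig.[x] * ((a n).[x] - Ln * (b n.-1).[x] / gam).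
Definition D1f (x : R) : R :=
  1 / sig.[x] * ((b n).[x] + Ln * (b n.-1).[x] *
     ((a n.-1).[x] / (b n.-1).[x] + (x - bet) / gam)).
Definition C2f (x : R) : R :=
  - Lm / sig.[x] * ((a n).[x] / gam +
     (b n.-1).[x] / gam * (1 / Lm + (x - bet) / gam)).
Definition D2f (x : R) : R :=
  Lm / sig.[x] * ((sig.[x] - (b n).[x]) / gam +
     (b n.-1).[x] * ((a n.-1).[x] / (b n.-1).[x] + (x - bet) / gam) *
     (1 / Lm + (x - bet) / gam)).
Definition xi1 (x : R) : R := (C1f x * B2f x * gam + D1f x * Lm) / (Deltaf x * gam).
Definition xi2 (x : R) : R := (C2f x * B2f x * gam + D2f x * Lm) / (Deltaf x * gam).
Definition eta1 (x : R) : R := (D1f x - C1f x * Ln) / Deltaf x.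
Definition eta2 (x : R) : R := (D2f x - C2f x * Ln) / Deltaf x.

Definition RRf (x : R) : R :=
  - (xi1 x + eta2 x + derive1 eta1 x / eta1 x).
Definition SSf (x : R) : R :=
  xi1 x * eta2 x - eta1 x * xi2 x +
  (xi1 x * derive1 eta1 x - derive1 xi1 x * eta1 x) / eta1 x.

End Quantities.

(* Main.v *)
Require Import Defs.
From HB Require Import structures.
From mathcomp Require Import all_boot all_order all_algebra.
From mathcomp Require Import all_classical all_reals all_analysis.
From mathcomp Require Import measurable_realfun.
From mathcomp Require Import ring lra.
Import Order.TTheory GRing.Theory Num.Theory.
Import numFieldNormedType.Exports.
Local Open Scope classical_set_scope.
Local Open Scope ring_scope.
Set Implicit Arguments. Unset Strict Implicit. Unset Printing Implicit Defensive.


Section DV.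
Variable R : realType.
Implicit Types (f g : R -> R) (x : R).
Lemma dv_id x : derivable (fun y : R => y) x 1.
Proof. exact: derivable_id. Qed.
Lemma dv_cst (k : R) x : derivable (fun _ : R => k) x 1.
Proof. exact: (derivable_cst k x 1). Qed.
Lemma dv_add f g x : derivable f x 1 -> derivable g x 1 -> derivable (fun y => f y + g y) x 1.
Proof. move=> hf hg; exact: (derivableD hf hg). Qed.
Lemma dv_sub f g x : derivable f x 1 -> derivable g x 1 -> derivable (fun y => f y - g y) x 1.
Proof. move=> hf hg; exact: (derivableB hf hg). Qed.
Lemma dv_mul f g x : derivable f x 1 -> derivable g x 1 -> derivable (fun y => f y * g y) x 1.
Proof. move=> hf hg; exact: (derivableM hf hg). Qed.
Lemma dv_neg f x : derivable f x 1 -> derivable (fun y => - f y) x 1.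
Proof. move=> hf; exact: (derivableN hf). Qed.
Lemma dv_inv f x : f x != 0 -> derivable f x 1 -> derivable (fun y => (f y)^-1) x 1.
Proof. move=> h hf; exact: (derivableV h hf). Qed.
Lemma dv_div f g x : g x != 0 -> derivable f x 1 -> derivable g x 1 -> derivable (fun y => f y / g y) x 1.
Proof. move=> h hf hg; exact: (dv_mul hf (dv_inv h hg)). Qed.
Lemma dv_horner (p : {poly R}) x : derivable (fun y => p.[y]) x 1.
Proof. exact: (@derivable_horner R p x). Qed.
Lemma d1_add f g x : derivable f x 1 -> derivable g x 1 ->
  derive1 (fun y => f y + g y) x = derive1 f x + derive1 g x.
Proof. by move=> hf hg; rewrite !derive1E (deriveD hf hg). Qed.
Lemma d1_mul f g x : derivable f x 1 -> derivable g x 1 ->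
  derive1 (fun y => f y * g y) x = derive1 f x * g x + f x * derive1 g x.
Proof. by move=> hf hg; rewrite !derive1E (deriveM hf hg) addrC mulrC. Qed.
Lemma d1_horner (p : {poly R}) x : derive1 (fun y => p.[y]) x = (deriv p).[x].
Proof. by rewrite (@derivE R p). Qed.
End DV.

Lemma size_sub_coef (R : ringType) (D Q : {poly R}) m :
  (size D <= m.+1)%N -> Q \is monic -> size Q = m.+1 ->
  (size (D - D`_m *: Q)%R <= m)%N.
Proof.
move=> sD mQ sQ; apply/leq_sizeP => i Hi.
rewrite coefB coefZ.
have [->|lt] := eqVneq i m.
  have : lead_coef Q = 1 by apply/monicP.
  by rewrite lead_coefE sQ /= => ->; rewrite mulr1 subrr.
have Hi' : (m < i)%N by rewrite ltn_neqAle eq_sym lt Hi.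
rewrite (nth_default 0 (leq_trans sD Hi')) (nth_default 0 (_ : (size Q <= i)%N)) ?sQ // mulr0 subrr ?subr0 //.
Qed.

Section Ortho.
Variable R : fieldType.
Variable B : {poly R} -> {poly R} -> R.
Hypothesis BD : forall p q r, B p (q + r) = B p q + B p r.
Hypothesis BZ : forall p k q, B p (k *: q) = k * B p q.
Hypothesis Bsym : forall p q, B p q = B q p.
Variable Q : nat -> {poly R}.
Hypothesis HQ : is_MOPS B Q.

Lemma B0 p : B p 0 = 0.
Proof. by rewrite -(scale0r (0 : {poly R})) BZ mul0r. Qed.

Lemma BB p q r : B p (q - r) = B p q - B p r.
Proof. by rewrite BD -scaleN1r BZ mulN1r. Qed.

Lemma ortho_low k (g : {poly R}) : (size g <= k)%N -> B (Q k) g = 0.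
Proof.
move=> Hg.
suff H : forall s (g : {poly R}), (size g <= s)%N -> (s <= k)%N -> B (Q k) g = 0.
  exact: (H k g Hg (leqnn k)).
elim=> [|s IH] {g Hg} g Hg Hs.
  by move: Hg; rewrite leqn0 size_poly_eq0 => /eqP ->; rewrite B0.
have [mQ sQ oQ nQ] := HQ s.
have Hg' := size_sub_coef Hg mQ sQ.
have -> : g = (g - g`_s *: Q s) + g`_s *: Q s by rewrite subrK.
have [_ _ oK _] := HQ k.
rewrite BD BZ (IH _ Hg') ?(ltnW Hs) // oK ?mulr0 ?addr0 //.
by move=> E; move: Hs; rewrite E ltnn.
Qed.

Lemma nondeg (S : {poly R}) m : (size S <= m)%N ->
  (forall h : {poly R}, (size h <= m)%N -> B S h = 0) -> S = 0.
Proof.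
move=> HS Hh; apply/eqP; apply/negPn/negP => S0.
set d := (size S).-1.
have sS : size S = d.+1 by rewrite /d prednK // size_poly_gt0.
have [mQ sQ _ nQ] := HQ d.
have Hsub := size_sub_coef (eq_leq sS) mQ sQ.
have : B S (Q d) = 0 by apply: Hh; rewrite sQ -sS.
have E : B (Q d) S = S`_d * B (Q d) (Q d).
  by rewrite -{1}(subrK (S`_d *: Q d) S) BD BZ ortho_low // add0r.
have nQ' : B (Q d) (Q d) != 0 by apply/eqP.
rewrite Bsym E => /eqP; rewrite mulf_eq0 (negbTE nQ') orbF => /eqP Sd.
by move: S0; rewrite -lead_coef_eq0 lead_coefE sS /= Sd eqxx.
Qed.

Lemma decomp k (Q' : {poly R}) : (0 < k)%N -> Q' \is monic -> size Q' = k.+1 ->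
  (forall h : {poly R}, (size h <= k.-1)%N -> B Q' h = 0) ->
  Q' = Q k + (Q' - Q k)`_k.-1 *: Q k.-1.
Proof.
move=> k0 mQ' sQ' Hh.
have [mk sk _ _] := HQ k.
have [mk1 sk1 _ _] := HQ k.-1.
set D := Q' - Q k.
have sD : (size D <= k)%N.
  apply/leq_sizeP => i Hi; rewrite coefB.
  have [->|lt] := eqVneq i k.
    move/monicP: mQ'; move/monicP: mk; rewrite !lead_coefE sQ' sk /= => -> ->.
    by rewrite subrr.
  have Hi' : (k < i)%N by rewrite ltn_neqAle eq_sym lt Hi.
  by rewrite !nth_default ?subrr // ?sQ' ?sk.
have sk1' : size (Q k.-1) = (k.-1).+1 by rewrite sk1.
have sD' : (size D <= (k.-1).+1)%N by rewrite prednK.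
have HS := size_sub_coef sD' mk1 sk1'.
set S := D - D`_k.-1 *: Q k.-1 in HS.
suff S0 : S = 0.
  by apply/eqP; rewrite -subr_eq0 -/D -/S; rewrite /S opprD addrA -/D ?S0 // ; apply/eqP;
    rewrite -[RHS]S0 /S /D; congr (_ - _).
apply: (nondeg HS) => h Hh'.
rewrite Bsym /S /D !BB BZ !(Bsym h) Hh // ortho_low ?ortho_low ?mulr0 ?subrr //.
  by rewrite (leq_trans Hh') // leq_pred.
Qed.
End Ortho.

Lemma lam_alg (F : fieldType) (p0 p1 f0 f1 n2 kap lam N : F) :
  p0 != 0 -> f0 != 0 -> n2 != 0 ->
  f1 + kap * f0 = 0 -> p0 * f1 - p1 * f0 = n2 ->
  f1 + lam * f0 + N * (p1 + lam * p0) = 0 ->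
  1 + N * (- (p1 + kap * p0) * p0 / n2) != 0 ->
  lam = (p1 / p0 - f1 / f0) / (1 + N * (- (p1 + kap * p0) * p0 / n2)) - p1 / p0.
Proof.
move=> p00 f00 n20 hk hw hl hb.
have hk' : kap = - f1 / f0.
  have e1 : kap * f0 = - f1 by rewrite -[RHS]sub0r -hk; ring.
  by rewrite -e1 mulfK.
have hB : - (p1 + kap * p0) * p0 / n2 = p0 / f0.
  by rewrite hk' -hw; field; rewrite f00 hw.
rewrite hB in hb *.
have hD : f0 + N * p0 != 0.
  apply: contra hb => /eqP h; apply/eqP.
  by rewrite -[1](divff f00) mulrA -mulrDl h mul0r.
have hl' : lam = - (f1 + N * p1) / (f0 + N * p0).
  rewrite -[lam](mulfK hD); congr (_ / _).
  by rewrite -[RHS]sub0r -hl; ring.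
by rewrite hl'; field; rewrite p00 f00 hD.
Qed.

Section Integ.
Variable R : realType.
Variable mu : {measure set (measurableTypeR R) -> \bar R}.
Variables (c e : R).
Hypothesis Hmom : forall k : nat, mu.-integrable setT (fun t : R => (t ^+ k)%:E).
Hypothesis e0 : 0 < e.
Hypothesis Hball : mu `](c - e), (c + e)[%classic = 0%E.

Lemma mhorner (p : {poly R}) : measurable_fun setT (horner p).
Proof. exact: (@continuous_measurable_fun R _ (@continuous_horner R p)). Qed.

Lemma intP (p : {poly R}) : mu.-integrable setT (EFin \o horner p).
Proof.
have -> : EFin \o horner p =
    (fun t => \sum_(i < size p) ((p`_i)%:E * (t ^+ i)%:E)%E).
  apply/funext => t /=; rewrite horner_coef -sumEFin.
  by apply: eq_bigr => i _; rewrite EFinM.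
by apply: integrable_sum => // i _; exact: integrableZl.
Qed.

Lemma derivable_frac (p : {poly R}) t : t != c ->
  derivable (fun t => p.[t] / (t - c)) t 1.
Proof.
move=> tc.
apply: dv_div; first by rewrite subr_eq0.
  exact: dv_horner.
apply: dv_sub; [exact: dv_id|exact: dv_cst].
Qed.

Lemma mfrac (p : {poly R}) : measurable_fun setT (fun t => p.[t] / (t - c)).
Proof.
rewrite -(setvU [set c]).
apply/measurable_funU; [ |exact: measurable_set1|split].
- by apply: measurableC; exact: measurable_set1.
- apply: open_continuous_measurable_fun.
    rewrite openC; apply: accessible_closed_set1; apply: hausdorff_accessible; exact: Rhausdorff.
  move=> t; rewrite inE /= => /eqP tc.
  apply: differentiable_continuous; apply/derivable1_diffP.
  exact: derivable_frac.
- move=> _ Y mY.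
  have [Yc|Yc] := pselect (Y (p.[c] / (c - c))).
    rewrite (_ : _ `&` _ = [set c]); first exact: measurable_set1.
    by apply/seteqP; split => [t [->]//|t ->]; split.
  rewrite (_ : _ `&` _ = set0) //.
  by apply/seteqP; split => [t [/= ->]//|t].
Qed.

Lemma mT (f : R -> R) : measurable_fun (setT : set R) f ->
  measurable_fun (setT : set (measurableTypeR R)) f.
Proof. move=> mf _ Y mY. exact: (mf measurableT Y mY). Qed.

Lemma intQ (p : {poly R}) : mu.-integrable setT (EFin \o (fun t => p.[t] / (t - c))).
Proof.
have mf : measurable_fun (setT : set (measurableTypeR R)) (EFin \o (fun t => p.[t] / (t - c))).
  by apply/measurable_EFinP; apply: mT; exact: mfrac.
have mN : measurable (`](c - e), (c + e)[%classic : set (measurableTypeR R)).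
  exact: measurable_itv.
have := negligible_integrable mN measurableT mf Hball.
move=> ->.
have mD : measurable (setT `\` `](c - e), (c + e)[%classic : set (measurableTypeR R)).
  by apply: measurableD => //.
apply: (le_integrable (g := fun t => ((e^-1)%:E * (p.[t])%:E)%E) mD).
- exact: measurable_funS mf.
- move=> t [_ tN] /=.
  have et : e <= `|t - c|.
    rewrite leNgt; apply/negP => H; apply: tN.
    by rewrite /= in_itv /= -ltr_distl.
  have tc0 : 0 < `|t - c| by exact: lt_le_trans e0 et.
  have hinv : `|t - c|^-1 <= e^-1 by rewrite lef_pV2 ?posrE.
  have e0' : 0 <= e^-1 by rewrite invr_ge0 ltW.
  rewrite lee_fin !normrM normfV [`|e^-1|]ger0_norm //.
  rewrite mulrC; exact: (ler_wpM2r (normr_ge0 _) hinv).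
- apply: (integrableS (E := setT)) => //.
  exact: integrableZl (intP p).
Qed.

Lemma mEP (p : {poly R}) : measurable_fun (setT : set (measurableTypeR R)) (fun t => (p.[t])%:E).
Proof. by apply/measurable_EFinP; apply: mT; exact: mhorner. Qed.
Lemma mEQ (p : {poly R}) : measurable_fun (setT : set (measurableTypeR R)) (fun t => (p.[t] / (t - c))%:E).
Proof. by apply/measurable_EFinP; apply: mT; exact: mfrac. Qed.

Definition J0 (p : {poly R}) := ip mu (fun t => p.[t]).
Definition J1 (p : {poly R}) := ip mu (fun t => p.[t] / (t - c)).

Lemma J0D p q : J0 (p + q) = J0 p + J0 q.
Proof.
rewrite /J0 (_ : (fun t => (p + q).[t]) = (fun t => p.[t] + q.[t])); last first.
  by apply/funext => t; rewrite hornerD.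
by rewrite /ip RintegralD //; [exact: intP|exact: intP].
Qed.

Lemma J0Z k p : J0 (k *: p) = k * J0 p.
Proof.
rewrite /J0 (_ : (fun t => (k *: p).[t]) = (fun t => k * p.[t])); last first.
  by apply/funext => t; rewrite hornerZ.
by rewrite /ip RintegralZl //; exact: intP.
Qed.

Lemma J1D p q : J1 (p + q) = J1 p + J1 q.
Proof.
rewrite /J1 (_ : (fun t => (p + q).[t] / (t - c)) = (fun t => p.[t] / (t - c) + q.[t] / (t - c))); last first.
  by apply/funext => t; rewrite hornerD mulrDl.
by rewrite /ip RintegralD //; [exact: intQ|exact: intQ].
Qed.

Lemma J1Z k p : J1 (k *: p) = k * J1 p.
Proof.
rewrite /J1 (_ : (fun t => (k *: p).[t] / (t - c)) = (fun t => k * (p.[t] / (t - c)))); last first.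
  by apply/funext => t; rewrite hornerZ mulrA.
by rewrite /ip RintegralZl //; exact: intQ.
Qed.

Lemma J1X p : J1 (('X - c%:P) * p) = J0 p.
Proof.
rewrite /J1 /J0 /ip /Rintegral; congr fine.
apply: ae_eq_integral => //; [exact: mEQ|exact: mEP|].
have mN : measurable (`](c - e), (c + e)[%classic : set (measurableTypeR R)).
  exact: measurable_itv.
exists `](c - e), (c + e)[%classic; split => // t /= Ht.
have [tc|tc] := eqVneq t c.
  by rewrite in_itv /= tc gtrBl ltrDl e0.
exfalso; apply: Ht => _; congr (_%:E).
by rewrite hornerM !hornerE mulrC mulrA mulVf ?mul1r // subr_eq0 tc.
Qed.


Lemma J10 : J1 0 = 0.
Proof. by rewrite -(scale0r (0 : {poly R})) J1Z mul0r. Qed.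
Lemma J1B p q : J1 (p - q) = J1 p - J1 q.
Proof. by rewrite -scaleN1r J1D J1Z mulN1r. Qed.

Variables (P Qc QcN : nat -> {poly R}) (beta gamma : nat -> R) (N : R).
Hypothesis HP : is_MOPS (mu_form mu) P.
Hypothesis Hrec : forall k, 'X * P k = P k.+1 + beta k *: P k + gamma k *: Pprev P k.
Hypothesis HQc : is_MOPS (geron_form mu c) Qc.
Hypothesis HQcN : is_MOPS (geronN_form mu c N) QcN.

Lemma formE p q : mu_form mu p q = J0 (p * q).
Proof. by rewrite /mu_form /J0; congr ip; apply/funext => t; rewrite hornerM. Qed.
Lemma gformE p q : geron_form mu c p q = J1 (p * q).
Proof. by rewrite /geron_form /J1; congr ip; apply/funext => t; rewrite hornerM. Qed.
Lemma gNformE p q : geronN_form mu c N p q = J1 (p * q) + N * p.[c] * q.[c].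
Proof. by rewrite /geronN_form gformE. Qed.

Lemma HP0 : is_MOPS (fun p q => J0 (p * q)) P.
Proof.
have <- : mu_form mu = (fun p q => J0 (p * q)).
  by apply/funext => p; apply/funext => q; rewrite formE.
exact: HP.
Qed.
Lemma HQc1 : is_MOPS (fun p q => J1 (p * q)) Qc.
Proof.
have <- : geron_form mu c = (fun p q => J1 (p * q)).
  by apply/funext => p; apply/funext => q; rewrite gformE.
exact: HQc.
Qed.
Lemma HQcN1 : is_MOPS (fun p q => J1 (p * q) + N * p.[c] * q.[c]) QcN.
Proof.
have <- : geronN_form mu c N = (fun p q => J1 (p * q) + N * p.[c] * q.[c]).
  by apply/funext => p; apply/funext => q; rewrite gNformE.
exact: HQcN.
Qed.

Lemma B0D p q r : J0 (p * (q + r)) = J0 (p * q) + J0 (p * r).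
Proof. by rewrite mulrDr J0D. Qed.
Lemma B0Z p k q : J0 (p * (k *: q)) = k * J0 (p * q).
Proof. by rewrite -scalerAr J0Z. Qed.
Lemma B0S p q : J0 (p * q) = J0 (q * p).
Proof. by rewrite mulrC. Qed.
Lemma B1D p q r : J1 (p * (q + r)) = J1 (p * q) + J1 (p * r).
Proof. by rewrite mulrDr J1D. Qed.
Lemma B1Z p k q : J1 (p * (k *: q)) = k * J1 (p * q).
Proof. by rewrite -scalerAr J1Z. Qed.
Lemma BND p q r : J1 (p * (q + r)) + N * p.[c] * (q + r).[c] =
  (J1 (p * q) + N * p.[c] * q.[c]) + (J1 (p * r) + N * p.[c] * r.[c]).
Proof. by rewrite mulrDr J1D hornerD; ring. Qed.
Lemma BNZ p k q : J1 (p * (k *: q)) + N * p.[c] * (k *: q).[c] =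
  k * (J1 (p * q) + N * p.[c] * q.[c]).
Proof. by rewrite -scalerAr J1Z hornerZ; ring. Qed.

Lemma ortho0 k (g : {poly R}) : (size g <= k)%N -> J0 (P k * g) = 0.
Proof. exact: (ortho_low (B := fun p q => J0 (p * q)) B0D B0Z HP0). Qed.

Lemma gdecomp (Bf : {poly R} -> {poly R} -> R) (Q : nat -> {poly R}) :
  (forall p q r, Bf p (q + r) = Bf p q + Bf p r) ->
  (forall p k q, Bf p (k *: q) = k * Bf p q) ->
  is_MOPS Bf Q ->
  (forall q h, Bf q (('X - c%:P) * h) = J0 (q * h)) ->
  forall k, (0 < k)%N -> Q k = P k + (Q k - P k)`_k.-1 *: P k.-1.
Proof.
move=> BD BZ HQ HX k k0; have [mQ sQ _ _] := HQ k.
apply: (decomp (B := fun p q => J0 (p * q)) B0D B0Z B0S HP0 k0 mQ sQ) => h Hh.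
rewrite -HX; apply: (ortho_low BD BZ HQ).
rewrite (leq_trans (size_polyMleq _ _)) // size_XsubC /=.
by rewrite -(prednK k0) ltnS.
Qed.

Lemma HX1 q h : J1 (q * (('X - c%:P) * h)) = J0 (q * h).
Proof. by rewrite mulrCA J1X. Qed.
Lemma HXN q h : J1 (q * (('X - c%:P) * h)) + N * q.[c] * (('X - c%:P) * h).[c] = J0 (q * h).
Proof. by rewrite HX1 hornerM hornerXsubC subrr mul0r mulr0 addr0. Qed.

Lemma qcE k : (0 < k)%N -> exists kap,
  Qc k = P k + kap *: P k.-1 /\ J1 (P k) + kap * J1 (P k.-1) = 0.
Proof.
move=> k0.
have D := gdecomp B1D B1Z HQc1 HX1 k0.
exists ((Qc k - P k)`_k.-1); split => //.
have : J1 (Qc k * 1) = 0.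
  by apply: (ortho_low (B := fun p q => J1 (p * q)) B1D B1Z HQc1); rewrite size_poly1.
by rewrite mulr1 {1}D J1D J1Z.
Qed.

Lemma qcNE k : (0 < k)%N -> exists lam,
  QcN k = P k + lam *: P k.-1 /\
  J1 (P k) + lam * J1 (P k.-1) + N * ((P k).[c] + lam * (P k.-1).[c]) = 0.
Proof.
move=> k0.
have D := gdecomp BND BNZ HQcN1 HXN k0.
exists ((QcN k - P k)`_k.-1); split => //.
have : J1 (QcN k * 1) + N * (QcN k).[c] * 1.[c] = 0.
  by apply: (ortho_low (B := fun p q => J1 (p * q) + N * p.[c] * q.[c]) BND BNZ HQcN1); rewrite size_poly1.
by rewrite mulr1 hornerC mulr1 {1 2}D J1D J1Z hornerD hornerZ.
Qed.

Lemma P0 : P 0 = 1.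
Proof.
have [mP sP _ _] := HP 0.
rewrite (size1_polyC (eq_leq sP)); congr (_%:P).
by move/monicP: mP; rewrite lead_coefE sP.
Qed.

Lemma Prec k : P k.+1 = ('X - c%:P) * P k + (c - beta k) *: P k - gamma k *: Pprev P k.
Proof.
have H := Hrec k.
rewrite -!mul_polyC in H *.
by rewrite polyCB !mulrBl H; ring.
Qed.

Lemma J1rec k : J1 (P k.+1) = J0 (P k) + (c - beta k) * J1 (P k) - gamma k * J1 (Pprev P k).
Proof. by rewrite {1}Prec J1B J1D !J1Z J1X. Qed.

Lemma Hev k : (P k.+1).[c] = (c - beta k) * (P k).[c] - gamma k * (Pprev P k).[c].
Proof. by rewrite {1}Prec !hornerE subrr mul0r add0r. Qed.

Lemma orthoP m n : m <> n -> J0 (P m * P n) = 0.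
Proof. by move=> mn; have [_ _ H _] := HP0 m; apply: H => nm; apply: mn. Qed.

Lemma nrm k : J0 (P k.+1 * P k.+1) = gamma k.+1 * J0 (P k * P k).
Proof.
have E : J0 (('X * P k.+1) * P k) = J0 (P k.+1 * ('X * P k)).
  by rewrite mulrCA mulrA.
rewrite Hrec Hrec /= in E.
have n2 : k.+2 <> k by apply/eqP; rewrite gtn_eqF.
have n1 : k.+1 <> k by apply/eqP; rewrite gtn_eqF.
rewrite mulrDl mulrDl J0D J0D -!scalerAl !J0Z (orthoP n2) (orthoP n1) mulr0 !add0r in E.
rewrite mulrDr mulrDr J0D J0D -!scalerAr !J0Z (orthoP n1) mulr0 addr0 in E.
have sp : (size (Pprev P k) <= k.+1)%N.
  by case: (k) => [|j] /=; [rewrite size_poly0|have [_ -> _ _] := HP0 j].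
by rewrite (ortho0 sp) mulr0 addr0 in E; rewrite E.
Qed.

Lemma J0P k : J0 (P k.+1) = 0.
Proof. by rewrite -[P k.+1]mulr1 ortho0 // size_poly1. Qed.

Lemma Wr k : (P k).[c] * J1 (P k.+1) - (P k.+1).[c] * J1 (P k) = J0 (P k * P k).
Proof.
elim: k => [|k IH].
  by rewrite J1rec Hev /= J10 horner0 P0 hornerC mulr1 mul1r mulr0 !subr0 mulr1 addrK.
rewrite (J1rec k.+1) (Hev k.+1) /= J0P nrm -IH; ring.
Qed.

Lemma LamE j : (P j).[c] != 0 -> J1 (P j) != 0 ->
  1 + N * Bc mu P Qc c j.+1 != 0 ->
  QcN j.+1 = P j.+1 + Lam mu P Qc c N j.+1 *: P j.
Proof.
move=> p00 f00 hb.
have [lam [DN EN]] := qcNE (ltn0Sn j).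
have [kap [DC EC]] := qcE (ltn0Sn j).
rewrite /= in DN EN DC EC.
rewrite DN; congr (_ + _ *: _).
have [_ _ _ n20] := HP0 j.
have n20' : J0 (P j * P j) != 0 by apply/eqP.
move: hb; rewrite /Lam /piC /rC /Bc /= formE.
change (Fst mu P j.+1 c) with (J1 (P j.+1)).
change (Fst mu P j c) with (J1 (P j)).
rewrite DC hornerD hornerZ => hb.
apply: (lam_alg p00 f00 n20' _ _ _ hb).
- exact: EC.
- exact: (Wr j).
- exact: EN.
Qed.
End Integ.

Section Ladder.
Variable R : realType.
Variable mu : {measure set (measurableTypeR R) -> \bar R}.
Variables (P Qc QcN : nat -> {poly R}) (beta gamma : nat -> R) (sig : {poly R})
  (a b : nat -> {poly R}) (c N : R) (m : nat) (y : R).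
Hypothesis Hstr : forall k, sig * deriv (P k) = a k * P k + b k * Pprev P k.
Hypothesis Hrec : forall k, 'X * P k = P k.+1 + beta k *: P k + gamma k *: Pprev P k.
Hypothesis HQ2 : QcN m.+2 = P m.+2 + Lam mu P Qc c N m.+2 *: P m.+1.
Hypothesis HQ1 : QcN m.+1 = P m.+1 + Lam mu P Qc c N m.+1 *: P m.
Hypothesis g0 : gamma m.+1 != 0.
Hypothesis L0 : Lam mu P Qc c N m.+1 != 0.
Hypothesis s0 : sig.[y] != 0.
Hypothesis b0 : (b m.+1).[y] != 0.
Hypothesis D0 : Deltaf mu P Qc beta gamma c N m.+2 y != 0.

Lemma ladder1 :
  (deriv (QcN m.+2)).[y] =
    xi1 mu P Qc beta gamma sig a b c N m.+2 y * (QcN m.+2).[y] +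
    eta1 mu P Qc beta gamma sig a b c N m.+2 y * (QcN m.+1).[y].
Proof.
have hS1 := congr1 (horner^~ y) (Hstr m.+2).
have hS2 := congr1 (horner^~ y) (Hstr m.+1).
have hR := congr1 (horner^~ y) (Hrec m.+1).
have hRd := congr1 (fun p => (deriv p).[y]) (Hrec m.+1).
rewrite /= !hornerE in hS1 hS2 hR.
rewrite /= derivM derivX !derivD !derivZ !hornerE in hRd.
rewrite HQ2 HQ1 derivD derivZ !hornerE.
have D0' := D0. have L0' := L0. have g0' := g0. have s0' := s0. have b0' := b0.
rewrite /xi1 /eta1 /C1f /D1f /Deltaf /B2f /= in D0' *.
set u := (P m.+2).[y] in hS1 hS2 hR hRd *.
set v := (P m.+1).[y] in hS1 hS2 hR hRd *.
set w := (P m).[y] in hS1 hS2 hR hRd *.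
set du := (deriv (P m.+2)).[y] in hS1 hS2 hR hRd *.
set dv := (deriv (P m.+1)).[y] in hS1 hS2 hR hRd *.
set dw := (deriv (P m)).[y] in hS1 hS2 hR hRd *.
set Ln := Lam mu P Qc c N m.+2 in D0' *.
set Lm := Lam mu P Qc c N m.+1 in L0' D0' *.
set gm := gamma m.+1 in g0' hR hRd D0' *.
set bt := beta m.+1 in hR hRd D0' *.
set sg := sig.[y] in s0' hS1 hS2 *.
set bm := (b m.+1).[y] in b0' hS2 *.
have edu : du = ((a m.+2).[y] * u + (b m.+2).[y] * v) / sg by rewrite -hS1 mulrC mulKf.
have edv : dv = ((a m.+1).[y] * v + bm * w) / sg by rewrite -hS2 mulrC mulKf.
have ew : w = (y * v - u - bt * v) / gm.
  have e : gm * w = y * v - u - bt * v by rewrite hR; ring.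
  by rewrite -e mulrC mulKf.
have hD : gm + (y - bt) * Lm + Ln * Lm != 0.
  have eD : Lm * (1 / Lm + (y - bt) / gm) + Ln * Lm / gm =
    (gm + (y - bt) * Lm + Ln * Lm) / gm by field; rewrite g0' L0'.
  rewrite eD in D0'; apply: contra D0' => /eqP ->; by rewrite mul0r.
rewrite edu edv ew.
by field; rewrite g0' L0' hD s0' b0'.
Qed.
Lemma ladder2 :
  (deriv (QcN m.+1)).[y] =
    xi2 mu P Qc beta gamma sig a b c N m.+2 y * (QcN m.+2).[y] +
    eta2 mu P Qc beta gamma sig a b c N m.+2 y * (QcN m.+1).[y].
Proof.
have hS1 := congr1 (horner^~ y) (Hstr m.+2).
have hS2 := congr1 (horner^~ y) (Hstr m.+1).
have hR := congr1 (horner^~ y) (Hrec m.+1).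
have hRd := congr1 (fun p => (deriv p).[y]) (Hrec m.+1).
rewrite /= !hornerE in hS1 hS2 hR.
rewrite /= derivM derivX !derivD !derivZ !hornerE in hRd.
rewrite HQ2 HQ1 derivD derivZ !hornerE.
have D0' := D0. have L0' := L0. have g0' := g0. have s0' := s0. have b0' := b0.
rewrite /xi2 /eta2 /C2f /D2f /Deltaf /B2f /= in D0' *.
set u := (P m.+2).[y] in hS1 hS2 hR hRd *.
set v := (P m.+1).[y] in hS1 hS2 hR hRd *.
set w := (P m).[y] in hS1 hS2 hR hRd *.
set du := (deriv (P m.+2)).[y] in hS1 hS2 hR hRd *.
set dv := (deriv (P m.+1)).[y] in hS1 hS2 hR hRd *.
set dw := (deriv (P m)).[y] in hS1 hS2 hR hRd *.
set Ln := Lam mu P Qc c N m.+2 in D0' *.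
set Lm := Lam mu P Qc c N m.+1 in L0' D0' *.
set gm := gamma m.+1 in g0' hR hRd D0' *.
set bt := beta m.+1 in hR hRd D0' *.
set sg := sig.[y] in s0' hS1 hS2 *.
set bm := (b m.+1).[y] in b0' hS2 *.
have edu : du = ((a m.+2).[y] * u + (b m.+2).[y] * v) / sg by rewrite -hS1 mulrC mulKf.
have edv : dv = ((a m.+1).[y] * v + bm * w) / sg by rewrite -hS2 mulrC mulKf.
have ew : w = (y * v - u - bt * v) / gm.
  have e : gm * w = y * v - u - bt * v by rewrite hR; ring.
  by rewrite -e mulrC mulKf.
have hD : gm + (y - bt) * Lm + Ln * Lm != 0.
  have eD : Lm * (1 / Lm + (y - bt) / gm) + Ln * Lm / gm =
    (gm + (y - bt) * Lm + Ln * Lm) / gm by field; rewrite g0' L0'.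
  rewrite eD in D0'; apply: contra D0' => /eqP ->; by rewrite mul0r.
have edw : dw = (v + y * dv - du - bt * dv) / gm.
  have e : gm * dw = v + y * dv - du - bt * dv by rewrite hRd; ring.
  by rewrite -e mulrC mulKf.
rewrite edw edu edv ew.
by field; rewrite g0' L0' hD s0' b0'.
Qed.
End Ladder.

Ltac dvt1 H := lazymatch goal with
  | |- derivable (fun _ => ?k) _ _ => exact: dv_cst
  | |- derivable (fun y => y) _ _ => exact: dv_id
  | |- derivable (fun y => horner ?p y) _ _ => exact: dv_horner
  | |- derivable (fun y => @?A y + @?B y) _ _ => apply: (dv_add (f := A) (g := B))
  | |- derivable (fun y => @?A y * @?B y) _ _ => apply: (dv_mul (f := A) (g := B))
  | |- derivable (fun y => - @?A y) _ _ => apply: (dv_neg (f := A))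
  | |- derivable (fun y => (@?A y)^-1) _ _ => apply: (dv_inv (f := A))
  | |- derivable _ _ _ => exact: H
  end.
Ltac dvt H := repeat (dvt1 H).

Section Final.
Variable R : realType.
Variable mu : {measure set (measurableTypeR R) -> \bar R}.
Variables (P Qc : nat -> {poly R}) (beta gamma : nat -> R) (sig : {poly R})
  (a b : nat -> {poly R}) (c N : R) (n : nat) (x : R).

Lemma near_nz (f : R -> R) : derivable f x 1 -> f x != 0 -> \forall y \near x, f y != 0.
Proof.
move=> df fx.
have cf : {for x, continuous f}.
  by apply: differentiable_continuous; apply/derivable1_diffP.
apply: (cf [set z | z != 0]); exists `|f x|; first by rewrite /= normr_gt0.
by move=> z /= hz; apply/eqP => z0; move: hz; rewrite z0 subr0 ltxx.
Qed.

Lemma dDelta : derivable (Deltaf mu P Qc beta gamma c N n) x 1.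
Proof. rewrite /Deltaf /B2f; dvt dv_id. Qed.

Hypothesis s0 : sig.[x] != 0.
Hypothesis b0 : (b n.-1).[x] != 0.
Hypothesis D0 : Deltaf mu P Qc beta gamma c N n x != 0.
Hypothesis g0 : gamma n.-1 != 0.

Lemma dxi1 : derivable (xi1 mu P Qc beta gamma sig a b c N n) x 1.
Proof.
have dD := dDelta.
rewrite /xi1 /C1f /D1f /B2f; dvt dD.
all: try by [].
by rewrite mulf_neq0.
Qed.

Lemma deta1 : derivable (eta1 mu P Qc beta gamma sig a b c N n) x 1.
Proof.
have dD := dDelta.
rewrite /eta1 /C1f /D1f; dvt dD.
all: by [].
Qed.
End Final.

Theorem theorem5 (R : realType) (mu : {measure set (measurableTypeR R) -> \bar R})
  (P : nat -> {poly R}) (beta gamma : nat -> R) (sig : {poly R})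
  (a b : nat -> {poly R}) (c N : R) (Qc QcN : nat -> {poly R})
  (n : nat) (x : R) :
  (* mu absolutely continuous w.r.t. Lebesgue measure *)
  mu `<< (@lebesgue_measure R) ->
  (* finite moments *)
  (forall k : nat, mu.-integrable setT (fun t : R => (t ^+ k)%:E)) ->
  (* support E infinite, c outside E, N > 0 *)
  infinite_set (msupport mu) ->
  ~ msupport mu c ->
  0 < N ->
  (* monic OPS for mu, three-term recurrence *)
  is_MOPS (mu_form mu) P ->
  (forall k, 'X * P k = P k.+1 + beta k *: P k + gamma k *: Pprev P k) ->
  (* semi-classical structure relation, degrees independent of n *)
  (exists d : nat, forall k, (size (a k) <= d)%N /\ (size (b k) <= d)%N) ->
  (forall k, sig * deriv (P k) = a k * P k + b k * Pprev P k) ->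
  (* the Geronimus-type MOPS *)
  is_MOPS (geron_form mu c) Qc ->
  is_MOPS (geronN_form mu c N) QcN ->
  (* all quantities are defined *)
  (2 <= n)%N ->
  (P n.-1).[c] != 0 -> (P n.-2).[c] != 0 ->
  Fst mu P n.-1 c != 0 -> Fst mu P n.-2 c != 0 ->
  1 + N * Bc mu P Qc c n != 0 -> 1 + N * Bc mu P Qc c n.-1 != 0 ->
  gamma n.-1 != 0 ->
  Lam mu P Qc c N n.-1 != 0 ->
  sig.[x] != 0 ->
  (b n.-1).[x] != 0 ->
  Deltaf mu P Qc beta gamma c N n x != 0 ->
  eta1 mu P Qc beta gamma sig a b c N n x != 0 ->
  (deriv (deriv (QcN n))).[x]
    + RRf mu P Qc beta gamma sig a b c N n x * (deriv (QcN n)).[x]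
    + SSf mu P Qc beta gamma sig a b c N n x * (QcN n).[x] = 0.
Proof.
move=> _ Hmom _ Hc _ HP Hrec _ Hstr HQc HQcN n2 p1 p2 f1 f2 hb1 hb2 g0 L0 s0 b0 D0 E0.
have [m Em] : exists m, n = m.+2 by exists n.-2; case: n n2 {p1 p2 f1 f2 hb1 hb2 g0 L0 b0 D0 E0} => [|[|k]].
subst n; rewrite /= in p1 p2 f1 f2 hb1 hb2 g0 L0 b0.
have [e [e0 He]] : exists e : R, 0 < e /\ mu `](c - e), (c + e)[%classic = 0%E.
  apply: contrapT => H; apply: Hc => e e0.
  rewrite lt0e measure_ge0 andbT; apply/eqP => H0; apply: H; by exists e.
have HQ2 := LamE Hmom e0 He HP Hrec HQc HQcN p1 f1 hb1.
have HQ1 := LamE Hmom e0 He HP Hrec HQc HQcN p2 f2 hb2.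
have dD : derivable (Deltaf mu P Qc beta gamma c N m.+2) x 1 by exact: dDelta.
have dA : derivable (xi1 mu P Qc beta gamma sig a b c N m.+2) x 1 by apply: dxi1.
have dB : derivable (eta1 mu P Qc beta gamma sig a b c N m.+2) x 1 by apply: deta1.
have Ns : \forall y \near x, sig.[y] != 0 by apply: near_nz => //; exact: dv_horner.
have Nb : \forall y \near x, (b m.+1).[y] != 0 by apply: near_nz => //; exact: dv_horner.
have ND : \forall y \near x, Deltaf mu P Qc beta gamma c N m.+2 y != 0 by apply: near_nz.
have Hnear : \forall y \near x, (deriv (QcN m.+2)).[y] =
   xi1 mu P Qc beta gamma sig a b c N m.+2 y * (QcN m.+2).[y] +
   eta1 mu P Qc beta gamma sig a b c N m.+2 y * (QcN m.+1).[y].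
  near=> y.
  apply: (ladder1 Hstr Hrec HQ2 HQ1 g0 L0).
  - by near: y.
  - by near: y.
  - by near: y.
have E : derive1 (fun y => (deriv (QcN m.+2)).[y]) x =
  derive1 (fun y => xi1 mu P Qc beta gamma sig a b c N m.+2 y * (QcN m.+2).[y] +
   eta1 mu P Qc beta gamma sig a b c N m.+2 y * (QcN m.+1).[y]) x.
  by rewrite !derive1E; apply: near_eq_derive.
have dQ2 : derivable (fun y => (QcN m.+2).[y]) x 1 by exact: dv_horner.
have dQ1 : derivable (fun y => (QcN m.+1).[y]) x 1 by exact: dv_horner.
rewrite d1_horner (d1_add (dv_mul dA dQ2) (dv_mul dB dQ1)) (d1_mul dA dQ2) (d1_mul dB dQ1) !d1_horner in E.
have E1 := ladder1 Hstr Hrec HQ2 HQ1 g0 L0 s0 b0 D0.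
have E2 := ladder2 Hstr Hrec HQ2 HQ1 g0 L0 s0 b0 D0.
rewrite /RRf /SSf E E2 E1.
move: E0; set Ax := xi1 _ _ _ _ _ _ _ _ _ _ _ x; set Bx := eta1 _ _ _ _ _ _ _ _ _ _ _ x.
set Cx := xi2 _ _ _ _ _ _ _ _ _ _ _ x; set Dx := eta2 _ _ _ _ _ _ _ _ _ _ _ x.
set dAx := derive1 _ x; set dBx := derive1 _ x.
move=> E0.
by field.
Unshelve. all: by end_near.
Qed.
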